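(* Let $(p,f)$ be an SCF-RT that is rationalizable within the class of symmetric RUM-CFs, and let $(x,y)\in C\setminus D$. If there exists $z\in X$ such that $t(x,z)$ and $t(y,z)$ are defined and $t(x,z)\leq t(y,z)$, or $t(z,x)$ and $t(z,y)$ are defined and $t(z,x)\geq t(z,y)$, then every symmetric RUM-CF $(u,g,r)$ rationalizing $(p,f)$ satisfies $u(x)\geq u(y)$. If there exists $z\in X$ with $t(x,z)<t(y,z)$ or $t(z,x)>t(z,y)$ (the respective quantities being defined), then every such model satisfies $u(x)>u(y)$.
   Context: $X$ is a finite set of options; $C=\{(x,y): x,y\in X,\ x\neq y\}$; $D\subseteq C$ is a fixed non-empty set with $(x,y)\in D\Rightarrow (y,x)\in D$. An SCF $p$ assigns to each $(x,y)\in D$ a number $p(x,y)>0$ with $p(x,y)+p(y,x)=1$. An SCF-RT is a pair $(p,f)$ where $p$ is an SCF and $f$ assigns to each $(x,y)\in D$ a strictly positive density $f(x,y)$ on $\mathbb{R}^+$ with cdf $F(x,y)$. A RUM is a pair $(u,g)$ with $u:X\to\mathbb{R}$ and $g$ assigning to each $(x,y)\in C$ a density $g(x,y)$ on $\mathbb{R}$ (cdf $G(x,y)$) with $\int v\,g(x,y)(v)\,dv=u(x)-u(y)=:v(x,y)$, $g(x,y)(v)=g(y,x)(-v)$ for all $v$, and connected support. A RUM-CF is $(u,g,r)$ with $(u,g)$ a RUM and $r:\mathbb{R}^{++}\to\mathbb{R}^+$ continuous, strictly decreasing where $r(v)>0$, $\lim_{v\to0}r(v)=\infty$, $\lim_{v\to\infty}r(v)=0$;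 $r^{-1}(t)$ ($t>0$) is the inverse of $r$ restricted to $\{r>0\}$. It rationalizes $(p,f)$ if for all $(x,y)\in D$: $G(x,y)(0)=p(y,x)$ and $\frac{1-G(x,y)(r^{-1}(t))}{1-G(x,y)(0)}=F(x,y)(t)$ for all $t>0$. A RUM-CF is symmetric if each $g(x,y)$, $(x,y)\in C$, is symmetric around its mean: $g(x,y)(v(x,y)+\delta)=g(x,y)(v(x,y)-\delta)$ for all $\delta\geq0$. For $(a,b)\in D$ with $p(a,b)>p(b,a)$, $t(a,b)>0$ is defined by $F(a,b)(t(a,b))=p(b,a)/p(a,b)$; it is undefined otherwise. *)

(* Defs.v *)
From HB Require Import structures.
From mathcomp Require Import all_boot all_order all_algebra.
From mathcomp Require Import all_classical all_reals all_analysis.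
Set Implicit Arguments. Unset Strict Implicit. Unset Printing Implicit Defensive.
Import Order.TTheory GRing.Theory Num.Theory.
Import numFieldNormedType.Exports.
Local Open Scope classical_set_scope.
Local Open Scope ring_scope.

Section Defs.
Variable R : realType.
Notation mu := (@lebesgue_measure R).

Definition densityR (h : R -> R) : Prop :=
  measurable_fun setT h /\ (forall v, 0 <= h v) /\
  (\int[mu]_v (h v)%:E = 1)%E.

Definition cdfR (h : R -> R) (v : R) : R :=
  fine (\int[mu]_(w in `]-oo, (v%R:R)]) (h w)%:E)%E.

Definition pos_density (h : R -> R) : Prop :=
  measurable_fun `[(0%R:R), +oo[ h /\ (forall t, 0 <= t -> 0 < h t) /\
  (\int[mu]_(t in `[(0%R:R), +oo[) (h t)%:E = 1)%E.

Definition cdfRp (h : R -> R) (t : R) : R :=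
  fine (\int[mu]_(w in `[(0%R:R), t]) (h w)%:E)%E.

Variable X : finType.

Definition domain_ok (D : rel X) : Prop :=
  (forall x y, D x y -> x != y) /\ (exists x y, D x y) /\
  (forall x y, D x y -> D y x).

Definition SCF_RT (D : rel X) (p : X -> X -> R) (f : X -> X -> R -> R) : Prop :=
  forall x y, D x y ->
    0 < p x y /\ p x y + p y x = 1 /\ pos_density (f x y).

Definition connected_support (h : R -> R) : Prop :=
  forall a b c, a <= b -> b <= c -> 0 < h a -> 0 < h c -> 0 < h b.

(* RUM (u, g); g is given for every (x,y) in C, i.e. x != y *)
Definition RUM (u : X -> R) (g : X -> X -> R -> R) : Prop :=
  forall x y, x != y ->
    densityR (g x y) /\
    mu.-integrable setT (fun v => (v * g x y v)%:E) /\
    (\int[mu]_v (v * g x y v)%:E = (u x - u y)%:E)%E /\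
    (forall v, g x y v = g y x (- v)) /\
    connected_support (g x y).

(* the cost function r : R^{++} -> R^+ (only its values on (0,+oo) matter) *)
Definition cost_fun (r : R -> R) : Prop :=
  (forall v, 0 < v -> 0 <= r v) /\
  (forall v, 0 < v -> {for v, continuous r}) /\
  (forall v w, 0 < v -> v < w -> 0 < r v -> 0 < r w -> r w < r v) /\
  (r x @[x --> 0^'+] --> +oo) /\
  (r x @[x --> +oo] --> 0).

Definition RUM_CF (u : X -> R) (g : X -> X -> R -> R) (r : R -> R) : Prop :=
  RUM u g /\ cost_fun r.

Definition symmetric_RUM_CF (u : X -> R) (g : X -> X -> R -> R) (r : R -> R)
  : Prop :=
  RUM_CF u g r /\
  (forall x y, x != y -> forall d, 0 <= d ->
     g x y (u x - u y + d) = g x y (u x - u y - d)).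

(* v = r^{-1}(t): the (unique) v in {r > 0} with r v = t, for t > 0 *)
Definition is_rinv (r : R -> R) (t v : R) : Prop := 0 < v /\ r v = t.

Definition rationalizes (D : rel X) (p : X -> X -> R) (f : X -> X -> R -> R)
  (u : X -> R) (g : X -> X -> R -> R) (r : R -> R) : Prop :=
  forall x y, D x y ->
    cdfR (g x y) 0 = p y x /\
    (forall t, 0 < t -> forall v, is_rinv r t v ->
       (1 - cdfR (g x y) v) / (1 - cdfR (g x y) 0) = cdfRp (f x y) t).

(* tau = t(a,b): defined iff (a,b) in D and p(a,b) > p(b,a) *)
Definition t_is (D : rel X) (p : X -> X -> R) (f : X -> X -> R -> R)
  (a b : X) (tau : R) : Prop :=
  D a b /\ p b a < p a b /\ 0 < tau /\ cdfRp (f a b) tau = p b a / p a b.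

End Defs.

(* Main.v *)
Require Import Defs.
From HB Require Import structures.
From mathcomp Require Import all_boot all_order all_algebra.
From mathcomp Require Import all_classical all_reals all_analysis.
From mathcomp Require Import lra measurable_realfun.
Import Order.TTheory GRing.Theory Num.Theory.
Import numFieldNormedType.Exports.
Set Implicit Arguments. Unset Strict Implicit.
Local Open Scope classical_set_scope.
Local Open Scope ring_scope.

Section Meas.
Variable R : realType.
Local Notation mu := (@lebesgue_measure R).

Lemma refl_preimage (c a b : R) :
  (fun w : R => c - w) @^-1` `]a, b] = `[c - b, c - a[%classic.
Proof.
apply/seteqP; split => w /=; rewrite !in_itv /= => /andP[H1 H2];
  apply/andP; split; lra.
Qed.

Lemma mrefl (c : R) : measurable_fun [set: measurableTypeR R] (fun w : measurableTypeR R => c - w : measurableTypeR R).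
Proof. by apply: measurable_funB => //; exact: measurable_cst. Qed.

Lemma lebesgue_measure_refl (c : R) (A : set R) : measurable A ->
  pushforward mu (fun w : R => c - w : measurableTypeR R) A = mu A.
Proof.
move=> mA; apply/esym/lebesgue_measure_unique => //=; first exact: mrefl.
move=> _ _ [[a b]] _ <-.
rewrite /pushforward /= refl_preimage !lebesgue_measure_itv/=.
rewrite !lte_fin -!EFinD; have -> : (c - b < c - a) = (a < b) by apply/idP/idP; lra.
by case: ifPn => // _; congr (_%:E); lra.
Qed.

Lemma integral_refl (c : R) (k : R -> \bar R) (A : set R) :
  measurable A -> measurable_fun setT k -> (forall r, (0 <= k r)%E) ->
  (\int[mu]_(x in A) k x =
   \int[mu]_(x in (fun w : R => (c - w)%R : measurableTypeR R) @^-1` A) k (c - x)%R)%E.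
Proof.
move=> mA mk k0.
have := ge0_integral_pushforward (mrefl c) mu mA (measurable_funS _ _ mk) (fun y _ => k0 y).
rewrite /comp => <- //.
apply: eq_measure_integral => //=; first exact: mrefl.
by move=> _ B mB _; exact/esym/lebesgue_measure_refl.
Qed.

Section Dens.
Variable h : R -> R.
Hypothesis hd : densityR h.
Implicit Types A B : set (measurableTypeR R).
Local Notation I A := (\int[mu]_(w in A) (h w)%:E)%E.

Lemma h_ge0 w : 0 <= h w. Proof. by case: hd => _ []. Qed.

Lemma mh : measurable_fun setT (fun w => (h w)%:E).
Proof. by apply/measurable_EFinP; case: hd. Qed.

Lemma I_ge0 A : (0 <= I A)%E.
Proof. by apply: integral_ge0 => w _; rewrite lee_fin h_ge0. Qed.

Lemma I_le1 A : measurable A -> (I A <= 1)%E.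
Proof.
move=> mA; case: hd => _ [_ <-]; apply: ge0_subset_integral => //.
- exact: mh.
- by move=> w _; rewrite lee_fin h_ge0.
Qed.

Lemma I_fin A : measurable A -> I A \is a fin_num.
Proof.
move=> mA; rewrite ge0_fin_numE ?I_ge0 //.
by rewrite (le_lt_trans (I_le1 mA)) // ltry.
Qed.

Lemma I_E A : measurable A -> I A = (fine (I A))%:E.
Proof. by move=> mA; rewrite fineK // I_fin. Qed.

Lemma I_split A B : measurable A -> measurable B -> [disjoint A & B] ->
  I (A `|` B) = (I A + I B)%E.
Proof.
move=> mA mB AB; apply: ge0_integral_setU => //.
- exact: measurable_funS mh.
- by move=> w _; rewrite lee_fin h_ge0.
Qed.

Lemma cdf_split a b : a <= b -> cdfR h b = cdfR h a + fine (I `]a, b]).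
Proof.
move=> ab.
have E : `]-oo, b]%classic = `]-oo, a]%classic `|` `]a, b]%classic :> set R.
  apply/seteqP; split => w /=; rewrite !in_itv /=.
  - by move=> wb; case: (leP w a) => wa; [left|right; apply/andP; split].
  - by case=> [wa|/andP[_ ->//]]; apply: le_trans wa ab.
rewrite /cdfR E I_split //; last first.
  apply/disj_setPS => w [] /=; rewrite !in_itv /= => wa /andP[aw _].
  by move: (lt_le_trans aw wa); rewrite ltxx.
by rewrite fineD // I_fin.
Qed.

Lemma cdf_mono a b : a <= b -> cdfR h a <= cdfR h b.
Proof. by move=> ab; rewrite (cdf_split ab) lerDl fine_ge0 // I_ge0. Qed.

Lemma I_pos a b : a < b -> (forall w, a < w <= b -> 0 < h w) ->
  (0 < I `]a, b])%E.
Proof.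
move=> ab hpos; rewrite lt0e I_ge0 andbT; apply/negP => /eqP H0.
have mD : measurable (`]a, b] : set R) by [].
have : (\int[mu]_(w in `]a, b]) `|(h w)%:E| = 0)%E.
  by rewrite -H0; apply: eq_integral => w _; rewrite gee0_abs // lee_fin h_ge0.
move/(ae_eq_integral_abs mu mD (measurable_funS _ _ mh)) => /(_ measurableT (@subsetT _ _)) [N [mN N0 sub]].
have DN : `]a, b]%classic `<=` N.
  move=> w Dw; apply: sub => /= /(_ Dw) /eqP; rewrite eqe => /eqP hw0.
  by move: Dw; rewrite /= in_itv => /hpos; rewrite hw0 ltxx.
have : (mu `]a, b]%classic <= 0)%E.
  apply: le_trans (le_measure mu (mem_set mD) (mem_set mN) DN) _.
  by rewrite le_eqVlt; apply/orP; left; apply/eqP; exact: N0.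
rewrite lebesgue_measure_itv /= lte_fin ab -EFinD lee_fin; lra.
Qed.

Lemma cdf_strict a b : connected_support h -> a < b ->
  (exists w1, w1 <= a /\ 0 < h w1) -> (exists w2, b <= w2 /\ 0 < h w2) ->
  cdfR h a < cdfR h b.
Proof.
move=> cs ab [w1 [w1a h1]] [w2 [bw2 h2]].
rewrite (cdf_split (ltW ab)) ltrDl.
have : (0 < I `]a, b])%E.
  apply: I_pos => // w /andP[aw wb]; apply: (cs w1 w w2) => //.
  - exact: le_trans w1a (ltW aw).
  - exact: le_trans wb bw2.
by rewrite (I_E (A:=`]a, b]%classic)) // lte_fin.
Qed.

Lemma exists_left c : 0 < cdfR h c -> exists w, w <= c /\ 0 < h w.
Proof.
move=> H; apply: contrapT => /forallNP Hn; move: H.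
rewrite /cdfR (eq_integral (cst 0%E)); first by rewrite integral0 /= ltxx.
move=> w; rewrite inE /= in_itv /= => w0.
have := Hn w; case: (ltP 0 (h w)) => hw //; first by move=> []; split.
by move=> _; congr (_%:E); apply/eqP; rewrite eq_le hw h_ge0.
Qed.

Lemma refl_preimage_ninfty (c s : R) :
  (fun w : R => c - w) @^-1` `]-oo, (c - s)%R]%classic = `[s, +oo[%classic.
Proof.
apply/seteqP; split => w /=; rewrite !in_itv /= ?andbT => H; lra.
Qed.

Lemma cdf_refl c s : (forall w, h (c - w) = h w) -> cdfR h (c - s) = 1 - cdfR h s.
Proof.
move=> hs.
have E1 : I `]-oo, (c - s)%R] = I `[(s%R:R), +oo[.
  rewrite (integral_refl c) //; last 2 first.
  - exact: mh.
  - by move=> r; rewrite lee_fin h_ge0.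
  rewrite refl_preimage_ninfty; apply: eq_integral => w _; by rewrite hs.
have E2 : I setT = (I `]-oo, (s%R:R)[ + I `[(s%R:R), +oo[)%E.
  rewrite -I_split //; last first.
    apply/disj_setPS => w [] /=; rewrite !in_itv /= andbT => w0 w0'.
    by move: w0; rewrite ltNge w0'.
  congr (integral _ _ _); apply/seteqP; split => w //= _.
  rewrite !in_itv /= andbT; case: (ltP w s) => w0; [left|right] => //.
have E3 : I `]-oo, (s%R:R)[ = I `]-oo, (s%R:R)].
  by apply: integral_itv_bndo_bndc; exact: measurable_funS mh.
case: hd => _ [_ T1]; move: E2; rewrite T1 E3 => E2.
rewrite /cdfR E1; apply/eqP; rewrite eq_sym subr_eq; apply/eqP.
apply: EFin_inj; rewrite EFinD -!I_E // E2 addeC //.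
Qed.
End Dens.

Lemma rinv_exists (r : R -> R) : cost_fun r -> forall t, 0 < t -> exists v, is_rinv r t v.
Proof.
case=> r0 [rc [rdec [r0p rinf]]] t t0.
have [a [ta a0]] : exists a, t < r a /\ 0 < a.
  have H1 : \forall x \near (0:R)^'+, t < r x by move/cvgryPgt : r0p; apply.
  have H2 : \forall x \near (0:R)^'+, 0 < x by exact: nbhs_right_gt.
  have H3 := (@filterS2 _ _ _ (fun x => t < r x) (fun x => 0 < x)
    (fun x => t < r x /\ 0 < x) (fun x A B => conj A B) H1 H2).
  have [x Hx] := @filter_ex _ _ (at_right_proper_filter 0) _ (H3 (at_right_proper_filter 0)).
  by exists x.
have [b [tb ab]] : exists b, `|0 - r b| < t /\ a < b.
  have H1 : \forall x \near +oo, `|0 - r x| < t by move/cvgrPdist_lt: rinf; apply.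
  have H2 : \forall x \near +oo, a < x by exact: nbhs_pinfty_gt (num_real a).
  have H3 := (@filterS2 _ _ _ (fun x => `|0 - r x| < t) (fun x => a < x)
    (fun x => `|0 - r x| < t /\ a < x) (fun x A B => conj A B) H1 H2).
  have [x Hx] := @filter_ex _ _ proper_pinfty_nbhs _ (H3 proper_pinfty_nbhs).
  by exists x.
have rbt : r b < t by move: tb; rewrite sub0r normrN; apply: le_lt_trans; exact: ler_norm.
have rab : r b < r a by lra.
have cont : {within `[a, b], continuous r}.
  apply: continuous_in_subspaceT => x; rewrite inE /= in_itv /= => /andP[ax _].
  exact: rc x (lt_le_trans a0 ax).
have mm : Num.min (r a) (r b) <= t <= Num.max (r a) (r b).
  by rewrite (min_idPr (ltW rab)) (max_idPl (ltW rab)) !ltW.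
have [c cab rct] := IVT (ltW ab) cont mm.
exists c; split => //; move: cab; rewrite in_itv /= => /andP[ac _].
exact: lt_le_trans a0 ac.
Qed.
End Meas.

Section Main.
Variable R : realType.

Lemma cmp_lt (r : R -> R) v w : cost_fun r -> 0 < v -> 0 < r v -> 0 < r w -> v < w -> r w < r v.
Proof. by case=> _ [_ [rdec _]] v0 rv rw vw; apply: rdec. Qed.

Lemma cmp_le (r : R -> R) v w : cost_fun r -> 0 < v -> 0 < r v -> 0 < r w -> v <= w -> r w <= r v.
Proof.
move=> cf v0 rv rw; rewrite le_eqVlt => /orP[/eqP->//|vw].
exact: ltW (cmp_lt cf v0 rv rw vw).
Qed.

Lemma pair_key (X : finType) (D : rel X) (p : X -> X -> R) f u g r a b tau :
  domain_ok D -> SCF_RT D p f -> symmetric_RUM_CF u g r -> rationalizes D p f u g r ->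
  t_is D p f a b tau -> 0 < u a - u b /\ r (2 * (u a - u b)) = tau.
Proof.
move=> [Dne [_ Dsym]] scf [[rum cf] sym] rat [Dab [pba_lt [tau0 Ftau]]].
have ab := Dne _ _ Dab.
have [hd [_ [_ [_ cs]]]] := rum a b ab.
have [G0 Gt] := rat a b Dab.
have [pab0 [psum _]] := scf a b Dab.
have [pba0 _] := scf b a (Dsym _ _ Dab).
have S := sym a b ab.
set m := u a - u b in S *.
have hs : forall w, g a b (2 * m - w) = g a b w.
  move=> w; case: (leP m w) => mw.
  - have := S (w - m); rewrite subr_ge0 => /(_ mw).
    have -> : m + (w - m) = w by lra.
    have -> : m - (w - m) = 2 * m - w by lra.
    by move=> ->.
  - have := S (m - w); rewrite subr_ge0 => /(_ (ltW mw)).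
    have -> : m + (m - w) = 2 * m - w by lra.
    have -> : m - (m - w) = w by lra.
    by [].
have Gc s : cdfR (g a b) (2 * m - s) = 1 - cdfR (g a b) s.
  exact: cdf_refl.
have [v [v0 rv]] := rinv_exists cf tau0.
have Gv : cdfR (g a b) v = p a b.
  have := Gt tau tau0 v (conj v0 rv); rewrite Ftau G0.
  have -> : 1 - p b a = p a b by lra.
  move/(congr1 (fun z => z * p a b)); rewrite !divfK ?gt_eqF //; lra.
have G2m : cdfR (g a b) (2 * m) = p a b.
  by have := Gc 0; rewrite subr0 G0; lra.
have [w [w0 hw]] : exists w, w <= 2 * m - v /\ 0 < g a b w.
  by apply: exists_left => //; rewrite Gc Gv; lra.
have [w' [w'0 hw']] : exists w, w <= 2 * m /\ 0 < g a b w.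
  by apply: exists_left => //; rewrite G2m.
have [w'' [w''0 hw'']] : exists w, w <= 0 /\ 0 < g a b w.
  by apply: exists_left => //; rewrite G0.
case: (ltgtP v (2 * m)) => [vm|mv|vm].
- have := cdf_strict hd cs vm.
  have /[swap]/[apply] : exists w1, w1 <= v /\ 0 < g a b w1.
    by exists w''; split => //; lra.
  have /[swap]/[apply] : exists w2, 2 * m <= w2 /\ 0 < g a b w2.
    by exists (2 * m - w''); rewrite hs; split => //; lra.
  by rewrite Gv G2m ltxx.
- have := cdf_strict hd cs mv.
  have /[swap]/[apply] : exists w1, w1 <= 2 * m /\ 0 < g a b w1.
    by exists w'.
  have /[swap]/[apply] : exists w2, v <= w2 /\ 0 < g a b w2.
    by exists (2 * m - w); rewrite hs; split => //; lra.
  by rewrite Gv G2m ltxx.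
- split; first lra.
  by rewrite -vm.
Qed.
End Main.

Unset Implicit Arguments.
Local Close Scope classical_set_scope.

Theorem theorem2 (R : realType) (X : finType) (D : rel X)
  (p : X -> X -> R) (f : X -> X -> R -> R) :
  domain_ok D ->
  SCF_RT D p f ->
  (exists u g r, symmetric_RUM_CF u g r /\ rationalizes D p f u g r) ->
  forall x y : X, x != y -> ~~ D x y ->
  ((exists z : X,
      (exists t1 t2, t_is D p f x z t1 /\ t_is D p f y z t2 /\ t1 <= t2) \/
      (exists t1 t2, t_is D p f z x t1 /\ t_is D p f z y t2 /\ t2 <= t1)) ->
    forall u g r, symmetric_RUM_CF u g r -> rationalizes D p f u g r ->
      u y <= u x) /\
  ((exists z : X,
      (exists t1 t2, t_is D p f x z t1 /\ t_is D p f y z t2 /\ t1 < t2) \/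
      (exists t1 t2, t_is D p f z x t1 /\ t_is D p f z y t2 /\ t2 < t1)) ->
    forall u g r, symmetric_RUM_CF u g r -> rationalizes D p f u g r ->
      u y < u x).
Proof.
move=> dok scf _ x y _ _; split.
- move=> [z [[t1 [t2 [T1 [T2 le12]]]]|[t1 [t2 [T1 [T2 le12]]]]]] u g r sr rat;
    have cf := sr.1.2;
    have [m1 e1] := pair_key dok scf sr rat T1;
    have [m2 e2] := pair_key dok scf sr rat T2;
    have t10 := T1.2.2.1; have t20 := T2.2.2.1;
    rewrite leNgt; apply/negP => lt.
  + have : r (2 * (u y - u z)) < r (2 * (u x - u z)).
      apply: cmp_lt => //; [lra|by rewrite e1|by rewrite e2|lra].
    rewrite e1 e2; lra.
  + have : r (2 * (u z - u x)) < r (2 * (u z - u y)).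
      apply: cmp_lt => //; [lra|by rewrite e2|by rewrite e1|lra].
    rewrite e1 e2; lra.
- move=> [z [[t1 [t2 [T1 [T2 le12]]]]|[t1 [t2 [T1 [T2 le12]]]]]] u g r sr rat;
    have cf := sr.1.2;
    have [m1 e1] := pair_key dok scf sr rat T1;
    have [m2 e2] := pair_key dok scf sr rat T2;
    have t10 := T1.2.2.1; have t20 := T2.2.2.1;
    rewrite ltNge; apply/negP => lt.
  + have : r (2 * (u y - u z)) <= r (2 * (u x - u z)).
      apply: cmp_le => //; [lra|by rewrite e1|by rewrite e2|lra].
    rewrite e1 e2; lra.
  + have : r (2 * (u z - u x)) <= r (2 * (u z - u y)).
      apply: cmp_le => //; [lra|by rewrite e2|by rewrite e1|lra].
    rewrite e1 e2; lra.
Qed.
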